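(* One has $C^\perp=C^{\perp_{\mathbb{F}}}$ for every $A$-code $C$ if and only if either $m=1$ or $f(x)=x^2+ax-1$ for some $a\in\mathbb{F}$.
   Context: Let $\mathbb{F}$ be a finite field, $f(x)\in\mathbb{F}[x]$ monic of degree $m$, $A=\mathbb{F}[x]/\langle f(x)\rangle$, elements identified with polynomials of degree $<m$. An $A$-code of length $l$ is an $A$-submodule of $A^l$, and $C^\perp=\{a\in A^l:\sum_ia_ic_i=0\ \forall c\in C\}$ is its $A$-dual. Identify $g(x)=\sum_{i=0}^{m-1}a_ix^i\in A$ with $(a_0,\ldots,a_{m-1})\in\mathbb{F}^m$ and $A^l$ with $\mathbb{F}^{lm}$ by concatenation; the $\mathbb{F}$-dual $C^{\perp_{\mathbb{F}}}$ of $C$ is its dual with respect to the standard dot product on $\mathbb{F}^{lm}$, viewed as a subset of $A^l$. *)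

(* Defs.v *)
From HB Require Import structures.
From mathcomp Require Import all_boot all_order all_algebra all_field.
Set Implicit Arguments. Unset Strict Implicit. Unset Printing Implicit Defensive.
Import GRing.Theory.
Local Open Scope ring_scope.

(* A = F[x]/<f>, elements identified with polynomials of degree < m = deg f,
   i.e. of size < size f. *)

Definition degf (F : fieldType) (f : {poly F}) : nat := (size f).-1.

Definition inA (F : fieldType) (f : {poly F}) (p : {poly F}) : Prop :=
  (size p < size f)%N.

Definition inAl (F : fieldType) (f : {poly F}) (l : nat)
  (c : 'I_l -> {poly F}) : Prop := forall i, inA f (c i).

Definition mulA (F : fieldType) (f : {poly F}) (a b : {poly F}) : {poly F} :=
  (a * b) %% f.

Definition isACode (F : fieldType) (f : {poly F}) (l : nat)
  (C : ('I_l -> {poly F}) -> Prop) : Prop :=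
  [/\ forall c, C c -> inAl f c,
      C (fun _ => 0),
      forall c d, C c -> C d -> C (fun i => c i + d i)
    & forall a c, inA f a -> C c -> C (fun i => mulA f a (c i))].

Definition dotA (F : fieldType) (f : {poly F}) (l : nat)
  (a c : 'I_l -> {poly F}) : {poly F} :=
  (\sum_(i < l) a i * c i) %% f.

(* standard dot product on F^{lm} after identifying A^l with F^{lm} *)
Definition dotF (F : fieldType) (f : {poly F}) (l : nat)
  (a c : 'I_l -> {poly F}) : F :=
  \sum_(i < l) \sum_(j < degf f) (a i)`_j * (c i)`_j.

Definition Adual (F : fieldType) (f : {poly F}) (l : nat)
  (C : ('I_l -> {poly F}) -> Prop) : ('I_l -> {poly F}) -> Prop :=
  fun a => inAl f a /\ forall c, C c -> dotA f a c = 0.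

Definition Fdual (F : fieldType) (f : {poly F}) (l : nat)
  (C : ('I_l -> {poly F}) -> Prop) : ('I_l -> {poly F}) -> Prop :=
  fun a => inAl f a /\ forall c, C c -> dotF f a c = 0.

(* Main.v *)
Require Import Defs.
From HB Require Import structures.
From mathcomp Require Import all_boot all_order all_algebra all_field.
From mathcomp Require Import ring.
Import GRing.Theory.
Local Open Scope ring_scope.

Lemma size2E (F : fieldType) (p : {poly F}) :
  (size p <= 2)%N -> p = p`_1 *: 'X + (p`_0)%:P.
Proof.
move=> hs; apply/polyP => k; rewrite coefD coefZ coefX coefC.
case: k => [|[|k]] /=; rewrite ?mulr0 ?mulr1 ?add0r ?addr0 //.
by rewrite nth_default // (leq_trans hs).
Qed.

Lemma size3E (F : fieldType) (p : {poly F}) :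
  p \is monic -> size p = 3%N -> p = 'X^2 + p`_1 *: 'X + (p`_0)%:P.
Proof.
move=> mp hs; apply/polyP => k; rewrite !coefD coefXn coefZ coefX coefC.
case: k => [|[|[|k]]] /=; rewrite ?mulr0 ?mulr1 ?add0r ?addr0 //.
  by move/monicP: mp; rewrite /lead_coef hs.
by rewrite nth_default // hs.
Qed.

Lemma modp_sumE (F : fieldType) (f : {poly F}) (n : nat) (g : 'I_n -> {poly F}) :
  (\sum_(i < n) g i) %% f = \sum_(i < n) (g i %% f).
Proof.
elim/big_rec2: _ => [|i x y _ <-]; first by rewrite mod0p.
by rewrite modpD.
Qed.

Lemma key (F : fieldType) (f : {poly F}) :
  (degf f = 1%N \/ exists a : F, f = 'X^2 + a *: 'X - 1) ->
  forall u v : {poly F}, (size u < size f)%N -> (size v < size f)%N ->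
  ((u * v) %% f)`_0 = \sum_(j < degf f) u`_j * v`_j.
Proof.
case=> [hd|[a ->]] u v hu hv.
  have hs : size f = 2%N by move: hd; rewrite /degf; case: (size f) => [|[|[|]]].
  rewrite hd big_ord1.
  rewrite hs in hu hv.
  rewrite [u]size1_polyC // [v]size1_polyC // -polyCM modp_small; last first.
    by rewrite hs (leq_ltn_trans (size_polyC_leq1 _)).
  by rewrite coefC /= !coefC.
have hs : size ('X^2 + a *: 'X - 1 : {poly F}) = 3%N.
  rewrite -addrA size_polyDl ?size_polyXn //.
  rewrite (leq_ltn_trans (size_polyD _ _)) // gtn_max.
  rewrite (leq_ltn_trans (size_scale_leq _ _)) ?size_polyX //= size_polyN size_polyC; by case: (_ != _).

rewrite /degf hs /= big_ord_recr big_ord1 /=.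
rewrite hs in hu hv.
have eu := @size2E _ _ hu; have ev := @size2E _ _ hv.
set u0 := u`_0 in eu *; set u1 := u`_1 in eu *; set v0 := v`_0 in ev *; set v1 := v`_1 in ev *.
set r := ((u`_0 * v`_0 + u`_1 * v`_1)%:P + (u`_0 * v`_1 + u`_1 * v`_0 - a * (u`_1 * v`_1)) *: 'X : {poly F}).
have -> : u * v = (u`_1 * v`_1)%:P * ('X^2 + a *: 'X - 1) + r.
  rewrite /r {1}eu {1}ev -!mul_polyC !(polyCD, polyCM, polyCB, polyCN).
  ring.
rewrite modp_addl_mul_small; last first.
  rewrite hs /r (leq_ltn_trans (size_polyD _ _)) // gtn_max.
  by rewrite (leq_ltn_trans (size_polyC_leq1 _)) // (leq_ltn_trans (size_scale_leq _ _)) ?size_polyX.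
by rewrite /r coefD coefC coefZ coefX /= mulr0 addr0.
Qed.

Arguments key {F f}.

Lemma sum_delta (F : fieldType) (n j : nat) (G : nat -> F) : (j < n)%N ->
  \sum_(k < n) G k * (nat_of_ord k == j)%:R = G j.
Proof.
move=> hj; rewrite (bigD1 (Ordinal hj)) //= eqxx mulr1 big1 ?addr0 // => k hk.
have -> : (nat_of_ord k == j) = false.
  apply/negbTE; apply: contra hk => /eqP e; apply/eqP/val_inj => /=; exact e.
by rewrite mulr0.
Qed.

Lemma ord2 (i : 'I_2) : i = ord0 \/ i = ord_max.
Proof.
case: i => [[|[|k]] hk]; [left|right|by []]; exact: val_inj.
Qed.

Lemma lift00 : lift ord0 ord0 = ord_max :> 'I_2.
Proof. exact: val_inj. Qed.

Lemma dotF_dotA (F : fieldType) (f : {poly F}) l (a c : 'I_l -> {poly F}) :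
  (degf f = 1%N \/ exists a : F, f = 'X^2 + a *: 'X - 1) ->
  inAl f a -> inAl f c -> dotF f a c = (dotA f a c)`_0.
Proof.
move=> H ha hc; rewrite /dotF /dotA modp_sumE coef_sum; apply: eq_bigr => i _.
by rewrite (key H _ _ (ha i) (hc i)).
Qed.
Arguments dotF_dotA {F f l a c}.

Theorem mainTheorem15 (F : finFieldType) (f : {poly F})
  (f_monic : f \is monic) (f_nonconst : (1 < size f)%N) :
  (forall (l : nat) (C : ('I_l -> {poly F}) -> Prop),
      isACode f C -> forall a, Adual f C a <-> Fdual f C a)
  <->
  (degf f = 1%N \/ exists a : F, f = 'X^2 + a *: 'X - 1).
Proof.
have f0 : f != 0 by exact: monic_neq0.
split; last first.
  move=> H l C [hC _ _ hCs] a; split.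
    move=> [ha hd]; split => // c Cc; rewrite (dotF_dotA H) ?hd ?coef0 //; exact: hC.
  move=> [ha hd]; split => // c Cc.
  set s := dotA f a c.
  have hs : (size s < size f)%N by rewrite ltn_modp.
  have sj : forall j, (j < degf f)%N -> s`_j = 0.
    move=> j hj.
    have hXj : inA f 'X^j.
      rewrite /inA size_polyXn; move: hj; rewrite /degf; case: (size f) => //.
    have Ccj := hCs _ _ hXj Cc.
    have := hd _ Ccj; rewrite (dotF_dotA H) //; last exact: hC.
    have -> : dotA f a (fun i => Defs.mulA f 'X^j (c i)) = ('X^j * s) %% f.
      rewrite /dotA /s modp_mul mulr_sumr !modp_sumE; apply: eq_bigr => i _.
      by rewrite /Defs.mulA modp_mul mulrCA.
    rewrite (key H) //.
    under eq_bigr do rewrite coefXn mulrC.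
    by rewrite sum_delta.
  apply/polyP => k; rewrite coef0.
  case: (ltnP k (degf f)) => hk; first exact: sj.
  rewrite nth_default // (leq_trans _ hk) // /degf.
  by move: hs; case: (size f).
move=> H.
case: (eqVneq (degf f) 1%N) => hd; first by left.
have hf3 : (2 < size f)%N.
  move: hd f_nonconst; rewrite /degf; case: (size f) => [|[|[|]]] //.
pose C := fun c : 'I_2 -> {poly F} => inA f (c ord0) /\ c ord_max = (c ord0 * 'X) %% f.
have codeC : isACode f C.
  split.
  - move=> c [h0 h1] i; case: (ord2 i) => ->; first exact: h0.
    by rewrite h1 /inA ltn_modp.
  - by split; rewrite /inA ?size_poly0 ?mul0r ?mod0p //; apply: ltnW.
  - move=> c d [c0 c1] [d0 d1]; split; last by rewrite c1 d1 mulrDl modpD.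
    by rewrite /inA (leq_ltn_trans (size_polyD _ _)) // gtn_max c0 d0.
  - move=> b c hb [c0 c1]; split; first by rewrite /inA /Defs.mulA ltn_modp.
    rewrite /Defs.mulA c1 modp_mul [in RHS]mulrC modp_mul.
    congr (_ %% _); ring.
pose a := fun i : 'I_2 => if val i == 0%N then - 'X else (1 : {poly F}).
have Aa : Adual f C a.
  split.
    move=> i; case: (ord2 i) => -> /=; rewrite /inA ?size_polyN ?size_polyX ?size_poly1 //.
  move=> c [c0 c1]; rewrite /dotA big_ord_recl big_ord1 lift00 /= c1.
  by rewrite mul1r modpD modp_id mulNr modpN mulrC addNr.
have [_ Fa] := (H 2%N C codeC a).1 Aa.
pose c := fun i : 'I_2 => if val i == 0%N then 'X else ('X * 'X) %% f : {poly F}.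
have Cc : C c by split => //; rewrite /inA size_polyX.
have := Fa c Cc.
rewrite /dotF big_ord_recl big_ord1 lift00 /=.
have hd2 : (1 < degf f)%N by move: hf3; rewrite /degf; case: (size f) => [|[|[|]]].
under eq_bigr do rewrite coefX.
rewrite sum_delta // coefN coefX /= /a /c /=.
under eq_bigr do rewrite coef1 mulrC.
rewrite sum_delta; last exact: ltnW.
move=> h.
case: (ltngtP (size f) 3) => hs3.
- by move: hf3; rewrite ltnNge -ltnS hs3.
- move: h; rewrite modp_small; last by rewrite -expr2 size_polyXn.
  rewrite -expr2 coefXn /= addr0 => /eqP; rewrite oppr_eq0 oner_eq0 //.
have ef := @size3E _ _ f_monic hs3.
set f1 := f`_1 in ef *; set g0 := f`_0 in ef *.
have eX : 'X * 'X = 1 * f + - (f1 *: 'X + g0%:P).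
  rewrite {1}ef -mul_polyC; ring.
move: h; rewrite eX modp_addl_mul_small; last first.
  rewrite size_polyN hs3 (leq_ltn_trans (size_polyD _ _)) // gtn_max.
  by rewrite (leq_ltn_trans (size_polyC_leq1 _)) // (leq_ltn_trans (size_scale_leq _ _)) ?size_polyX.
rewrite coefN coefD coefZ coefX coefC /= mulr0 add0r => h.
have hg : g0 = -1 by move/eqP: h; rewrite subr_eq0 => /eqP ->.
right; exists f1; rewrite {1}ef hg polyCN polyC1 //.
Qed.
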